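(* Let $A$ be a partial ring and $\mathfrak{a}$ an ideal of $A$. Put $\sqrt{\mathfrak a}=\{a\in A:\exists r\in\mathbb{N},\ a^r\in\mathfrak a\}$. Then $\sqrt{\mathfrak a}=\bigcap_{\mathfrak p\in X_A,\ \mathfrak a\subseteq\mathfrak p}\mathfrak p$.
   Context: A partial ring is a set $A$ with $0$, a set $A_2\subseteq A\times A$ of summable pairs and a partial addition ($0$ a unit summable with everything; commutative; associative in the sense: $(a,b),(a+b,c)\in A_2$ iff $(b,c),(a,b+c)\in A_2$, and then $(a+b)+c=a+(b+c)$), with a commutative associative multiplication with unit $1$ such that $0\cdot a=0$ and $(a_1,a_2)\in A_2\Rightarrow(a_1x,a_2x)\in A_2$, $(a_1+a_2)x=a_1x+a_2x$. An ideal is a subset $I\ni 0$ with $a+b\in I$ whenever $a,b\in I$ and $(a,b)\in A_2$, and $AI\subseteq I$. A prime ideal is an ideal $\mathfrak p\neq A$ such that $xy\in\mathfrak p$ implies $x\in\mathfrak p$ or $y\in\mathfrak p$. $X_A$ is the set of prime ideals of $A$. (An empty intersection is $A$.) *)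

(* Defs.v *)
(* The partial addition is modelled by a total function
   [padd] together with the set [summable] (= A_2) of pairs on which it is
   defined; values of [padd] outside [summable] are never used. *)
Record PartialRing := {
  carrier :> Type;
  pzero : carrier;
  pone : carrier;
  summable : carrier -> carrier -> Prop;
  padd : carrier -> carrier -> carrier;
  pmul : carrier -> carrier -> carrier;
  summable_0l : forall a, summable pzero a;
  padd_0l : forall a, padd pzero a = a;
  summable_comm : forall a b, summable a b -> summable b a;
  padd_comm : forall a b, summable a b -> padd a b = padd b a;
  summable_assoc : forall a b c,
    (summable a b /\ summable (padd a b) c) <->
    (summable b c /\ summable a (padd b c));
  padd_assoc : forall a b c,
    summable a b -> summable (padd a b) c ->
    padd (padd a b) c = padd a (padd b c);
  pmul_comm : forall a b, pmul a b = pmul b a;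
  pmul_assoc : forall a b c, pmul (pmul a b) c = pmul a (pmul b c);
  pmul_1l : forall a, pmul pone a = a;
  pmul_0l : forall a, pmul pzero a = pzero;
  summable_mulr : forall a1 a2 x, summable a1 a2 -> summable (pmul a1 x) (pmul a2 x);
  pmul_addl : forall a1 a2 x, summable a1 a2 ->
    pmul (padd a1 a2) x = padd (pmul a1 x) (pmul a2 x)
}.

Section Defs.
Variable A : PartialRing.

Definition is_ideal (I : A -> Prop) : Prop :=
  I (pzero A) /\
  (forall a b, I a -> I b -> summable A a b -> I (padd A a b)) /\
  (forall x a, I a -> I (pmul A x a)).

Definition is_prime (p : A -> Prop) : Prop :=
  is_ideal p /\
  (exists x, ~ p x) /\
  (forall x y, p (pmul A x y) -> p x \/ p y).

Fixpoint ppow (a : A) (n : nat) : A :=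
  match n with
  | O => pone A
  | S n => pmul A a (ppow a n)
  end.

Definition radical (I : A -> Prop) : A -> Prop :=
  fun a => exists r : nat, I (ppow a r).

(* intersection of all primes containing I (empty intersection = A) *)
Definition primes_above_inter (I : A -> Prop) : A -> Prop :=
  fun a => forall p, is_prime p -> (forall x, I x -> p x) -> p a.
End Defs.

(* Main.v *)
Require Import Defs.
From Stdlib Require Import Classical.
From mathcomp Require Import all_boot.
From mathcomp Require Import boolp classical_sets.

Set Implicit Arguments.
Local Open Scope classical_set_scope.

Section S.
Variable A : PartialRing.

Lemma ppow_add (a : A) n m : ppow A a (n + m) = pmul A (ppow A a n) (ppow A a m).
Proof.
elim: n => [|n IH] /=; first by rewrite pmul_1l.
by rewrite IH pmul_assoc.
Qed.

Lemma ideal_mulr (J : A -> Prop) x z : is_ideal A J -> J x -> J (pmul A x z).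
Proof. by move=> [_ [_ HM]] Jx; rewrite pmul_comm; apply: HM. Qed.

Lemma colon_ideal (J : A -> Prop) z : is_ideal A J ->
  is_ideal A (fun w => J (pmul A w z)).
Proof.
move=> HJ; have [J0 [JD JM]] := HJ; split; first by rewrite pmul_0l.
split.
- move=> a b Ja Jb sab; rewrite pmul_addl //; apply: JD => //.
  exact: summable_mulr.
- by move=> x a Ja; rewrite pmul_assoc; apply: JM.
Qed.

Lemma prime_pow (p : A -> Prop) a r : is_prime A p -> p (ppow A a r) -> p a.
Proof.
move=> [Hid [[x nx] Hpr]]; elim: r => [|r IH] /=.
- move=> p1; exfalso; apply: nx; rewrite -(pmul_1l A x).
  exact: ideal_mulr.
- by move=> /Hpr [] //; apply: IH.
Qed.

End S.

Theorem mainTheorem19 (A : PartialRing) (I : A -> Prop) (HI : is_ideal A I) :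
  forall a : A, radical A I a <-> primes_above_inter A I a.
Proof.
move=> a; split.
  move=> [r Ir] p Hp IP; exact: (@prime_pow A p a r Hp (IP _ Ir)).
move=> Hall; apply: NNPP => Hnr.
pose good (X : set A) := [/\ is_ideal A X, I `<=` X & forall n, ~ X (ppow A a n)].
pose P (X : set A) := X = set0 \/ good X.
have [J [PJ Jmax]] : exists J, P J /\ forall B, J `<` B -> ~ P B.
  apply: Zorn_bigcup => F FP Ftot.
  have [[X FX nX]|] := pselect (exists2 X, F X & X !=set0); last first.
    move=> hn; left; apply/seteqP; split => // x [X FX Xx].
    by exfalso; apply: hn; exists X => //; exists x.
  have idl Y : F Y -> Y !=set0 -> good Y.
    by move=> FY ne; case: (FP _ FY) => // Y0; move: ne; rewrite Y0 => -[].
  have [[X0 [X1 X2]] XI Xd] := idl _ FX nX.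
  right; split.
  - split; first by exists X.
    split.
    + move=> x y [Y FY Yx] [Z FZ Zy] sxy.
      have [[Yi _ _] [Zi _ _]] := (idl _ FY (ex_intro _ _ Yx), idl _ FZ (ex_intro _ _ Zy)).
      have [YZ|ZY] := Ftot _ _ FY FZ.
      * exists Z => //; case: Zi => _ [Zs _]; apply: Zs => //; exact: YZ.
      * exists Y => //; case: Yi => _ [Ys _]; apply: Ys => //; exact: ZY.
    + move=> x y [Y FY Yy]; exists Y => //.
      by have [[_ [_ Ym]] _ _] := idl _ FY (ex_intro _ _ Yy); apply: Ym.
  - by move=> x Ix; exists X => //; apply: XI.
  - move=> n [Y FY Yn].
    by have [_ _ Yd] := idl _ FY (ex_intro _ _ Yn); apply: (Yd n).
have gJ : good J.
  case: PJ => // J0; exfalso; apply: (Jmax I); last by right; split => // n In; apply: Hnr; exists n.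
  rewrite J0; split => // HIs; case: HI => I0 _; exact: (HIs _ I0).
have [Jid IJ Jd] := gJ.
have maxl K : is_ideal A K -> J `<=` K -> (forall n, ~ K (ppow A a n)) -> K `<=` J.
  move=> Kid JK Kd; apply: NNPP => nKJ; apply: (Jmax K); first by split.
  by right; split => //; apply: subset_trans JK.
have Jp : is_prime A J.
  split => //; split.
    by exists (pone A); apply: (Jd 0).
  move=> x y Jxy; apply: NNPP => /not_or_and [nx ny]; apply: ny.
  have [dis|] := pselect (forall n, ~ J (pmul A (ppow A a n) x)).
    apply: (maxl (fun w => J (pmul A w x))) => //.
    - exact: colon_ideal.
    - by move=> w Jw; apply: ideal_mulr.
    - by rewrite pmul_comm.
  move=> /existsNP [n /NNPP Jn]; exfalso; apply: nx.
  apply: (maxl (fun w => J (pmul A w (ppow A a n)))) => //.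
  - exact: colon_ideal.
  - by move=> w Jw; apply: ideal_mulr.
  - by move=> k; rewrite -ppow_add; apply: Jd.
  - by rewrite pmul_comm.
apply: (Jd 1) => /=.
apply: ideal_mulr => //; exact: Hall.
Qed.
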